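(* In the setting below (the extended process built from a semi-Markov process satisfying conditions (i)–(v)), for each $1\le i\le\overline M$ there is a function $\overline\tau^\varepsilon_i$ such that $\lim_{\varepsilon\to0}\mathbb E\big(\overline T^\varepsilon(\bar x,\overline S_j)\big)/\overline\tau^\varepsilon_i=1$ uniformly in $\bar x\in\overline S_i$ for every $1\le j\le\overline M$ with $\overline P^\varepsilon_{ij}\not\equiv0$. Moreover there are $C,\varepsilon_0>0$ such that $\mathrm{Var}\big(\overline T^\varepsilon(\bar x,\overline S_j)\big)\le C(\overline\tau^\varepsilon_i)^2$ for every $\varepsilon\le\varepsilon_0$ (and $\bar x\in\overline S_i$), provided $\overline P^\varepsilon_{ij}\not\equiv0$.
   Context: $S$ is a metric space partitioned into disjoint Borel sets $S_1,\dots,S_M$; for $\varepsilon>0$, $Q^\varepsilon$ is a Markov kernel from $S$ to $S\times[0,\infty)$, $P^\varepsilon(x,B)=Q^\varepsilon(x,B\times[0,\infty))$, and for $P^\varepsilon(x,B)>0$, $T^\varepsilon(x,B)$ has law $\mathbb P(T^\varepsilon(x,B)\le t)=Q^\varepsilon(x,B\times[0,t])/P^\varepsilon(x,B)$. Assumptions: (i) $P^\varepsilon(x,S_i)=0$ for $x\in S_i$. (ii) For $i\ne j$, either $P^\varepsilon(x,S_j)=0$ for all $x\in S_i,\varepsilon$ (set $P^\varepsilon_{ij}\equiv0$) or it is positive for all $x\in S_i,\varepsilon$ and there are positive $P^\varepsilon_{ij}$ with $P^\varepsilon(x,S_j)/P^\varepsilon_{ij}\to1$ uniformly in $x\in S_i$;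 $\sum_{j\ne i}P^\varepsilon_{ij}=1$. (iii) communication: for $i\ne j$ a chain $i=i_1,\dots,i_k=j$ with $P^\varepsilon_{i_ri_{r+1}}>0$. (iv) For $P^\varepsilon_{ij}\not\equiv0$ there are $\tau^\varepsilon_{ij}$ with $\mathbb ET^\varepsilon(x,S_j)/\tau^\varepsilon_{ij}\to1$ uniformly in $x\in S_i$. (v) There are $C,\varepsilon_0$ with $\mathrm{Var}\,T^\varepsilon(x,S_j)\le C(\tau^\varepsilon_{ij})^2$ for $\varepsilon\le\varepsilon_0$, $x\in S_i$. Extended process: $\overline S=\{(x,j):x\in S_i,\ 1\le i,j\le M,\ P^\varepsilon_{ij}\not\equiv0\}$, with kernel $\overline Q^\varepsilon((x,j),(A\times\{k\})\times I)=\frac{1}{P^\varepsilon(x,S_j)}\int_{A\cap S_j}P^\varepsilon(y,S_k)\,Q^\varepsilon(x,dy\times I)$ for Borel $A\subseteq S$, $I\subseteq[0,\infty)$. $\overline S$ is partitioned into the sets $S_a\times\{b\}$ (with $P^\varepsilon_{ab}\not\equiv0$), re-indexed as $\overline S_1,\dots,\overline S_{\overline M}$. $\overline P^\varepsilon(\bar x,B)=\overline Q^\varepsilon(\bar x,B\times[0,\infty))$ and $\overline T^\varepsilon(\bar x,B)$ has law $\overline Q^\varepsilon(\bar x,B\times\cdot)/\overline P^\varepsilon(\bar x,B)$. If $\overline S_i=S_a\times\{b\}$ and $\overline S_j=S_c\times\{d\}$, set $\overline P^\varepsilon_{ij}=P^\varepsilon_{cd}$ if $b=c$ and $\overline P^\varepsilon_{ij}\equiv0$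 otherwise. *)

(* Defs.v *)
From HB Require Import structures.
From mathcomp Require Import all_boot all_order all_algebra.
From mathcomp Require Import all_classical all_reals all_analysis.
Set Implicit Arguments. Unset Strict Implicit. Unset Printing Implicit Defensive.
Import Order.TTheory GRing.Theory Num.Theory.
Import numFieldNormedType.Exports.
Local Open Scope classical_set_scope.
Local Open Scope ring_scope.

Section semi_markov_defs.
Context (d : measure_display) (S : measurableType d) (R : realType).

(* Q^eps(x, .) : a Markov kernel from S to S x [0,oo), modelled as a
   probability kernel into S x R (time marginal supported in [0,oo), see
   the hypothesis in the statement).  The argument eps is a real. *)

Definition Pk (Q : R -> R.-pker S ~> (S * R)%type) (eps : R) (x : S)
  (B : set S) : R := fine (Q eps x (B `*` setT)).

(* Generic "law with density": given the kernel measure mu = Q^eps(x,.) and a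
   weight w : S -> R, the measure  I |-> \int_{y, t in I} w y  mu(dy,dt)
   on times.  Its total mass, its first moment and its central second moment
   (the random time has the normalised law I |-> m(I)/m([0,oo))). *)
Definition wmass (mu : {measure set (S * R)%type -> \bar R}) (w : S -> R) : \bar R :=
  \int[mu]_(z in setT) (w z.1)%:E.

Definition wmean (mu : {measure set (S * R)%type -> \bar R}) (w : S -> R)
  : \bar R :=
  (((fine (wmass mu w))^-1)%:E * \int[mu]_(z in setT) (w z.1 * z.2)%:E)%E.

Definition wvar (mu : {measure set (S * R)%type -> \bar R}) (w : S -> R)
  : \bar R :=
  if wmean mu w \is a fin_num then
    (((fine (wmass mu w))^-1)%:E *
      \int[mu]_(z in setT) (w z.1 * (z.2 - fine (wmean mu w)) ^+ 2)%:E)%E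
  else +oo%E.

(* E T^eps(x,B) and Var T^eps(x,B): the law of T^eps(x,B) is
   Q^eps(x, B x .)/P^eps(x,B), i.e. weight = indicator of B. *)
Definition ET (Q : R -> R.-pker S ~> (S * R)%type) (eps : R) (x : S) (B : set S) :=
  wmean (Q eps x) (\1_B).
Definition VarT (Q : R -> R.-pker S ~> (S * R)%type) (eps : R) (x : S) (B : set S) :=
  wvar (Q eps x) (\1_B).

(* Extended process: from state (x,b), the kernel is
   Qbar((x,b),(A x {k}) x I) = 1/P(x,S_b) \int_{A cap S_b} P(y,S_k) Q(x,dy x I),
   so the law of Tbar((x,b), S_c x {k}) has, w.r.t. Q^eps(x,.), the weight
   y |-> 1/P(x,S_b) * 1_{S_c cap S_b}(y) * P(y,S_k). *)
Definition wbar (M : nat) (Q : R -> R.-pker S ~> (S * R)%type)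
  (S_ : 'I_M -> set S) eps (x : S) (b c k : 'I_M) : S -> R :=
  fun y => (Pk Q eps x (S_ b))^-1 * \1_(S_ c `&` S_ b) y * Pk Q eps y (S_ k).

Definition ETbar (M : nat) (Q : R -> R.-pker S ~> (S * R)%type) (S_ : 'I_M -> set S) (eps : R) (x : S) (b c k : 'I_M) :=
  wmean (Q eps x) (wbar Q S_ eps x b c k).
Definition VarTbar (M : nat) (Q : R -> R.-pker S ~> (S * R)%type) (S_ : 'I_M -> set S) (eps : R) (x : S) (b c k : 'I_M) :=
  wvar (Q eps x) (wbar Q S_ eps x b c k).

End semi_markov_defs.

Definition unif_ratio_to1 {T : Type} {R : realType}
  (f : R -> T -> \bar R) (g : R -> R) (A : set T) : Prop :=
  forall e : R, 0 < e -> exists delta : R, 0 < delta /\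
    forall eps : R, 0 < eps -> eps < delta -> forall x, A x ->
      f eps x \is a fin_num /\ `| fine (f eps x) / g eps - 1 | < e.

Definition unif_ratio_to1R {T : Type} {R : realType}
  (f : R -> T -> R) (g : R -> R) (A : set T) : Prop :=
  forall e : R, 0 < e -> exists delta : R, 0 < delta /\
    forall eps : R, 0 < eps -> eps < delta -> forall x, A x ->
      `| f eps x / g eps - 1 | < e.

Definition nz {R : realType} {M : nat} (Pm : R -> 'I_M -> 'I_M -> R)
  (i j : 'I_M) : Prop :=
  i <> j /\ ~ (forall eps : R, 0 < eps -> Pm eps i j = 0).

(* Main.v *)
Require Import Defs.
From HB Require Import structures.
From mathcomp Require Import all_boot all_order all_algebra.
From mathcomp Require Import all_classical all_reals all_analysis measurable_realfun.
From mathcomp Require Import ring lra.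
Import Order.TTheory GRing.Theory Num.Theory.
Import numFieldNormedType.Exports.
Local Open Scope classical_set_scope.
Local Open Scope ring_scope.

Lemma t1 (R : realFieldType) (L U p i1 j0 j1 : R) : 0 < L -> L <= U -> 0 < p -> 0 < j0 -> 0 <= i1 ->
  L * p <= j0 -> j0 <= U * p -> L * i1 <= j1 -> j1 <= U * i1 ->
  L * (p^-1 * i1) <= U * (j0^-1 * j1) /\ L * (j0^-1 * j1) <= U * (p^-1 * i1).
Proof.
move=> L0 LU p0 j00 i10 h1 h2 h3 h4.
have pn : p != 0 by rewrite gt_eqF.
have jn : j0 != 0 by rewrite gt_eqF.
have ab : 0 < p^-1 * j0^-1 by rewrite mulr_gt0 // invr_gt0.
have j10 : 0 <= j1 by nra.
split.
- have H : L * i1 * j0 <= U * j1 * p by nra.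
  have H2 := ler_wpM2r (ltW ab) H.
  have -> : L * (p^-1 * i1) = (L * i1 * j0) * (p^-1 * j0^-1) by field; rewrite ?pn ?jn.
  have -> : U * (j0^-1 * j1) = (U * j1 * p) * (p^-1 * j0^-1) by field; rewrite ?pn ?jn.
  exact: H2.
- have H : L * j1 * p <= U * i1 * j0 by nra.
  have H2 := ler_wpM2r (ltW ab) H.
  have -> : L * (j0^-1 * j1) = (L * j1 * p) * (p^-1 * j0^-1) by field; rewrite ?pn ?jn.
  have -> : U * (p^-1 * i1) = (U * i1 * j0) * (p^-1 * j0^-1) by field; rewrite ?pn ?jn.
  exact: H2.
Qed.
Lemma t3 (R : realFieldType) (w U I t a b : R) : 0 <= w -> w <= U * I -> 0 <= I ->
  w * (t - b) ^+ 2 <= 2 * U * (I * (t - a) ^+ 2) + 2 * (a - b) ^+ 2 * w.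
Proof.
move=> w0 wU I0.
have h1 : (t - b) ^+ 2 <= 2 * (t - a) ^+ 2 + 2 * (a - b) ^+ 2.
  have : 0 <= (t - 2 * a + b) ^+ 2 by exact: sqr_ge0.
  rewrite !expr2; lra.
have h2 : w * (t - b) ^+ 2 <= w * (2 * (t - a) ^+ 2 + 2 * (a - b) ^+ 2).
  exact: ler_wpM2l.
have h3 : w * (2 * (t - a) ^+ 2) <= U * I * (2 * (t - a) ^+ 2).
  by apply: ler_wpM2r => //; rewrite mulr_ge0 // sqr_ge0.
apply: (le_trans h2); rewrite mulrDr.
have -> : 2 * U * (I * (t - a) ^+ 2) = U * I * (2 * (t - a) ^+ 2) by ring.
have -> : 2 * (a - b) ^+ 2 * w = w * (2 * (a - b) ^+ 2) by ring.
by rewrite lerD2r.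
Qed.

Lemma t2 (R : realFieldType) (L U p j0 k v c : R) : 0 < L -> 0 < p -> 0 <= U -> 0 <= v ->
  L * p <= j0 -> k <= 2 * U * v + c * j0 ->
  j0^-1 * k <= 2 * (U / L) * (p^-1 * v) + c.
Proof.
move=> L0 p0 U0 v0 h1 h2.
have j00 : 0 < j0 by apply: lt_le_trans h1; rewrite mulr_gt0.
have jn : j0 != 0 by rewrite gt_eqF.
have pn : p != 0 by rewrite gt_eqF.
have Ln : L != 0 by rewrite gt_eqF.
have h3 : j0^-1 * k <= j0^-1 * (2 * U * v + c * j0) by rewrite ler_wpM2l // invr_ge0 ltW.
apply: (le_trans h3).
have -> : j0^-1 * (2 * U * v + c * j0) = (2 * U * v) * j0^-1 + c by field; rewrite jn.
rewrite lerD2r.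
have -> : 2 * (U / L) * (p^-1 * v) = (2 * U * v) * (L * p)^-1 by field; rewrite ?Ln ?pn.
apply: ler_wpM2l; first by rewrite !mulr_ge0.
by rewrite lef_pV2 ?posrE // mulr_gt0.
Qed.
Lemma t6 (R : realFieldType) (p P g del : R) : 0 < p -> 0 < P -> `|g / P - 1| < del ->
  p^-1 * P * (1 - del) * 1 <= p^-1 * 1 * g <= p^-1 * P * (1 + del) * 1.
Proof.
move=> p0 P0; rewrite ltr_norml => /andP[h1 h2].
have Pn : P != 0 by rewrite gt_eqF.
have e : g = (g / P) * P by rewrite mulfVK.
set r := g / P in h1 h2 e.
have a1 : P * (1 - del) <= g by rewrite e; nra.
have a2 : g <= P * (1 + del) by rewrite e; nra.
have pi : 0 < p^-1 by rewrite invr_gt0.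
rewrite !mulr1 -!mulrA !ler_pM2l //; by rewrite a1 a2.
Qed.

Lemma t4 (R : realFieldType) (del m mw tau e : R) : 0 < e -> e <= 1 -> del = e / 8 -> 0 <= m ->
  (1 - del) * m <= (1 + del) * mw -> (1 - del) * mw <= (1 + del) * m ->
  `|m / tau - 1| < del -> `|mw / tau - 1| < e.
Proof.
move=> e0 e1 de m0 h1 h2 h3.
have ee : e = 8 * del by rewrite de mulrC divfK // pnatr_eq0.
rewrite ee; rewrite ee in e0 e1.
have tau0 : 0 < tau.
  case: (ltgtP tau 0) => // [tn|tz]; last first.
    by move: h3; rewrite tz invr0 mulr0 sub0r normrN normr1; lra.
  have : m / tau <= 0 by rewrite mulr_ge0_le0 // ltW // invr_lt0.
  by move: h3; rewrite ltr_norml; lra.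
have ti : 0 < tau^-1 by rewrite invr_gt0.
have h1' := ler_wpM2r (ltW ti) h1; have h2' := ler_wpM2r (ltW ti) h2.
rewrite -!mulrA in h1' h2'.
move: h3; rewrite !ltr_norml.
set r := m / tau in h1' h2' *; set rw := mw / tau in h1' h2' *.
move=> /andP[a1 a2]; apply/andP; split; nra.
Qed.

Lemma t5 (R : realFieldType) (del m mw tau : R) : del = 2^-1 -> 0 <= m ->
  (1 - del) * m <= (1 + del) * mw -> (1 - del) * mw <= (1 + del) * m ->
  `|m / tau - 1| < del -> (m - mw) ^+ 2 <= 16 * tau ^+ 2.
Proof.
move=> de m0 h1 h2 h3.
have d0 : 0 < del by rewrite de invr_gt0.
have d1 : del * 2 = 1 by rewrite de mulVf // pnatr_eq0.
have tau0 : 0 < tau.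
  case: (ltgtP tau 0) => // [tn|tz]; last first.
    by move: h3; rewrite tz invr0 mulr0 sub0r normrN normr1; lra.
  have : m / tau <= 0 by rewrite mulr_ge0_le0 // ltW // invr_lt0.
  by move: h3; rewrite ltr_norml; lra.
have e : m = (m / tau) * tau by rewrite mulfVK // gt_eqF.
move: h3; rewrite ltr_norml => /andP[a1 a2].
have mt : m <= 2 * tau.
  rewrite e; set r := m / tau in a1 a2 *.
  have r2 : r <= 2 by lra.
  nra.
rewrite de in h1 h2.
have w0 : 0 <= mw by lra.
have w1 : mw <= 3 * m by lra.
have q1 : (m - mw) * (m - mw) <= (2 * m) * (2 * m) by nra.
have q2 : (2 * m) * (2 * m) <= (4 * tau) * (4 * tau) by nra.
rewrite expr2 (expr2 tau); lra.
Qed.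

Section core.
Context d (T : measurableType d) (R : realType).
Variable mu : {measure set (T * R)%type -> \bar R}.

Lemma mprod (f : T -> R) (h : R -> R) :
  measurable_fun setT f -> measurable_fun setT h ->
  measurable_fun setT (fun z : T * R => (f z.1 * h z.2)%:E).
Proof.
move=> mf mh; apply: measurableT_comp => //.
apply: measurable_funM.
- exact: (measurableT_comp mf measurable_fst).
- exact: (measurableT_comp mh measurable_snd).
Qed.

Lemma mfst (f : T -> R) :
  measurable_fun setT f ->
  measurable_fun setT (fun z : T * R => (f z.1)%:E).
Proof.
move=> mf; apply: measurableT_comp => //.
exact: (measurableT_comp mf measurable_fst).
Qed.

Hypothesis tpos : mu (setT `*` `]-oo, 0[) = 0%E.

Lemma int_pos (f : T -> R) : measurable_fun setT f ->
  (\int[mu]_(z in setT) (f z.1 * z.2)%:E =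
   \int[mu]_(z in setT) (f z.1 * Num.max z.2 0)%:E)%E.
Proof.
move=> mf; apply: (ae_eq_integral (fun z : T * R => (f z.1 * Num.max z.2 0)%:E)) => //.
- by apply: (mprod f id).
- apply: (mprod f (fun t => Num.max t 0)) => //; exact: (measurable_maxr (f:=id) (g:=cst 0) (D:=setT)).
- exists (setT `*` `]-oo, 0[); split => //.
    apply: measurableX => //; exact: measurable_itv.
  move=> [y t] /= H; split => //; rewrite in_itv /=.
  rewrite ltNge; apply/negP => t0; apply: H => _.
  by rewrite /Num.max ltNge t0.
Qed.

Lemma mind (B : set T) : measurable B -> measurable_fun setT (\1_B : T -> R).
Proof. by move=> mB; apply: measurable_indic. Qed.

Lemma indic_fst (B : set T) (z : T * R) :
  (\1_B z.1 : R) = \1_(B `*` setT) z.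
Proof.
case: z => y t; rewrite /indic /=; congr (_%:R).
by rewrite in_setX in_setT andbT.
Qed.

Lemma ind01 (B : set T) y : (\1_B y : R) = 0 \/ (\1_B y : R) = 1.
Proof. rewrite /indic; case: (y \in B); by [right|left]. Qed.

Lemma rlfy (x : \bar R) (c : R) : (0 <= x)%E -> 0 < c ->
  (c%:E * x)%E \is a fin_num -> exists r, x = r%:E.
Proof.
case: x => [r| |] // _ c0; first by exists r.
by rewrite mulry gtr0_sg // mul1e.
Qed.

Lemma rlfy2 (x : \bar R) (y : R) : (0 <= x)%E -> (x <= y%:E)%E ->
  exists r, x = r%:E.
Proof. by case: x => [r| |] // _ _; exists r. Qed.

Lemma mmax : measurable_fun setT (fun t : R => Num.max t 0).
Proof. exact: (measurable_maxr (f:=id) (g:=cst 0) (D:=setT)). Qed.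

Lemma mpoly2 (c : R) : measurable_fun setT (fun t : R => (t - c) ^+ 2).
Proof.
apply: measurable_funX; apply: measurable_funD => //; exact: measurable_cst.
Qed.

Lemma extcase (x : \bar R) : (0 <= x)%E -> (exists r, x = r%:E) \/ x = +oo%E.
Proof. by case: x => [r| |] // _; [left; exists r | right]. Qed.

Lemma fin_step (L U p j0 c : R) (K V : \bar R) : 0 < L -> 0 < p -> 0 < U ->
  L * p <= j0 -> 0 <= c -> (0 <= V)%E -> (0 <= K)%E ->
  (K <= (2 * U)%:E * V + c%:E * j0%:E)%E ->
  ((j0^-1)%:E * K <= (2 * (U / L))%:E * ((p^-1)%:E * V) + c%:E)%E.
Proof.
move=> L0 p0 U0 h1 c0 V0 K0 Kle.
have j00 : 0 < j0 by apply: lt_le_trans h1; rewrite mulr_gt0.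
have [[v Ev]|Ev] := extcase _ V0; rewrite Ev; last first.
  rewrite mulry gtr0_sg ?invr_gt0 // mul1e.
  by rewrite mulry gtr0_sg ?mul1e ?addye ?leey // mulr_gt0 // divr_gt0.
rewrite Ev -!EFinM -EFinD in Kle.
have [k Ek] := rlfy2 _ _ K0 Kle.
have v0 : 0 <= v by rewrite -lee_fin -Ev.
have kle : k <= 2 * U * v + c * j0 by rewrite -lee_fin -Ek.
rewrite Ek -!EFinM -EFinD lee_fin; apply: t2 => //; exact: ltW.
Qed.

Lemma core (B : set T) (mB : measurable B) (p : R) (p0 : 0 < p)
  (hB : mu (B `*` setT) = p%:E)
  (w : T -> R) (mw : measurable_fun setT w) (L U : R) (L0 : 0 < L) (LU : L <= U)
  (hw : forall y, L * \1_B y <= w y <= U * \1_B y)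
  (ETfin : wmean mu (\1_B) \is a fin_num) :
  let m := fine (wmean mu \1_B) in let mw := fine (wmean mu w) in
  [/\ wmean mu w \is a fin_num, 0 <= m, L * m <= U * mw, L * mw <= U * m &
   (wvar mu w <= (2 * (U / L))%:E * wvar mu \1_B + (2 * (m - mw) ^+ 2)%:E)%E].
Proof.
have hI0 : wmass mu (\1_B : T -> R) = p%:E.
  rewrite /wmass -hB -[in RHS](setIT (B `*` setT)) -integral_indic //; last first.
    exact: measurableX.
  by apply: eq_integral => z _; rewrite indic_fst.
have w0 y : 0 <= w y.
  case/andP: (hw y) => + _; apply: le_trans; rewrite mulr_ge0 //; first exact: ltW.
have mI := mfst _ (mind B mB).
have mW := mfst _ mw.
have L0' := ltW L0.
have U0 : 0 <= U := le_trans L0' LU.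
have hJ0lo : ((L * p)%:E <= wmass mu w)%E.
  rewrite EFinM -hI0 /wmass -ge0_integralZl_EFin //.
  apply: ge0_le_integral => //.
  - by move=> z _; rewrite -EFinM lee_fin mulr_ge0 //; exact: ltW.
  - by apply: emeasurable_funM => //; exact: mfst _ (mind B mB).
  - by move=> z _; rewrite -EFinM lee_fin; case/andP: (hw z.1).
have hJ0hi : (wmass mu w <= (U * p)%:E)%E.
  rewrite EFinM -hI0 /wmass -ge0_integralZl_EFin //.
  apply: ge0_le_integral => //.
  - by move=> z _; rewrite lee_fin.
  - by apply: emeasurable_funM => //; exact: mfst _ (mind B mB).
  - by move=> z _; rewrite -EFinM lee_fin; case/andP: (hw z.1).
have hI1 := int_pos _ (mind B mB).
have hJ1 := int_pos _ mw.
have mIx := mprod _ _ (mind B mB) mmax.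
have mWx := mprod _ _ mw mmax.
have I1ge0 : (0 <= \int[mu]_(z in setT) (\1_B z.1 * Num.max z.2 0)%:E)%E.
  by apply: integral_ge0 => z _; rewrite lee_fin mulr_ge0 // le_max lexx orbT.
have J1ge0 : (0 <= \int[mu]_(z in setT) (w z.1 * Num.max z.2 0)%:E)%E.
  by apply: integral_ge0 => z _; rewrite lee_fin mulr_ge0 // le_max lexx orbT.
have J0ge0 : (0 <= wmass mu w)%E.
  by apply: integral_ge0 => z _; rewrite lee_fin.
have hJ1lo : (L%:E * \int[mu]_(z in setT) (\1_B z.1 * Num.max z.2 0)%:E <=
              \int[mu]_(z in setT) (w z.1 * Num.max z.2 0)%:E)%E.
  rewrite -ge0_integralZl_EFin //; last first.
    by move=> z _; rewrite lee_fin mulr_ge0 // le_max lexx orbT.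
  apply: ge0_le_integral => //.
  - by move=> z _; rewrite -EFinM lee_fin !mulr_ge0 // le_max lexx orbT.
  - by apply: emeasurable_funM => //.
  - move=> z _; rewrite -EFinM lee_fin mulrA ler_wpM2r //; last by case/andP: (hw z.1).
    by rewrite le_max lexx orbT.
have hJ1hi : (\int[mu]_(z in setT) (w z.1 * Num.max z.2 0)%:E <=
     U%:E * \int[mu]_(z in setT) (\1_B z.1 * Num.max z.2 0)%:E)%E.
  rewrite -ge0_integralZl_EFin //; last first.
    by move=> z _; rewrite lee_fin mulr_ge0 // le_max lexx orbT.
  apply: ge0_le_integral => //.
  - by move=> z _; rewrite lee_fin !mulr_ge0 // le_max lexx orbT.
  - by apply: emeasurable_funM => //.
  - move=> z _; rewrite -EFinM lee_fin mulrA ler_wpM2r //; last by case/andP: (hw z.1).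
    by rewrite le_max lexx orbT.
have [i1 Ei1] : exists i1,
    (\int[mu]_(z in setT) (\1_B z.1 * Num.max z.2 0)%:E)%E = i1%:E.
  move: ETfin; rewrite /wmean hI0 hI1 /= => H.
  have [|r Hr] := rlfy _ (p^-1) I1ge0 _ H; [by rewrite invr_gt0 | by exists r].
have [j1 Ej1] : exists j1,
    (\int[mu]_(z in setT) (w z.1 * Num.max z.2 0)%:E)%E = j1%:E.
  have H2 : ((\int[mu]_(z in setT) (w z.1 * Num.max z.2 0)%:E) <= (U * i1)%:E)%E.
    by rewrite EFinM -Ei1; exact: hJ1hi.
  have [r Hr] := rlfy2 _ _ J1ge0 H2.
  by exists r.
have [j0 Ej0] : exists j0, wmass mu w = j0%:E.
  have [r Hr] := rlfy2 _ _ J0ge0 hJ0hi; by exists r.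
have Em : wmean mu \1_B = (p^-1 * i1)%:E by rewrite /wmean hI0 hI1 Ei1.
have Emw : wmean mu w = (j0^-1 * j1)%:E by rewrite /wmean Ej0 hJ1 Ej1.
rewrite Ej0 lee_fin in hJ0lo.
rewrite Ej0 lee_fin in hJ0hi.
rewrite Ei1 Ej1 -EFinM lee_fin in hJ1lo.
rewrite Ei1 Ej1 -EFinM lee_fin in hJ1hi.
have i10 : 0 <= i1 by rewrite -lee_fin -Ei1.
have j00 : 0 < j0 by apply: lt_le_trans hJ0lo; rewrite mulr_gt0.
have [T1a T1b] := t1 _ _ _ _ _ _ _ L0 LU p0 j00 i10 hJ0lo hJ0hi hJ1lo hJ1hi.
rewrite /= Em Emw /=; split => //; first by rewrite mulr_ge0 // invr_ge0 ltW.
rewrite /wvar Em Emw /= Ej0 hI0 /=.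
set m := p^-1 * i1; set mm := j0^-1 * j1.
have Kle : (\int[mu]_(z in setT) (w z.1 * (z.2 - mm) ^+ 2)%:E <=
   (2 * U)%:E * \int[mu]_(z in setT) (\1_B z.1 * (z.2 - m) ^+ 2)%:E +
   (2 * (m - mm) ^+ 2)%:E * j0%:E)%E.
  have nn1 : forall z : T * R, setT z -> (0 <= (\1_B z.1 * (z.2 - m) ^+ 2)%:E)%E.
    by move=> z _; rewrite lee_fin mulr_ge0 // sqr_ge0.
  have nn2 : forall z : T * R, setT z -> (0 <= (w z.1)%:E)%E.
    by move=> z _; rewrite lee_fin.
  have mm1 := mprod _ _ (mind B mB) (mpoly2 m).
  have U2 : 0 <= 2 * U by rewrite mulr_ge0.
  have c0 : 0 <= 2 * (m - mm) ^+ 2 by rewrite mulr_ge0 // sqr_ge0.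
  rewrite -Ej0 /wmass -(ge0_integralZl_EFin mu measurableT (f1 := fun z => (\1_B z.1 * (z.2 - m) ^+ 2)%:E)) //.
  rewrite -(ge0_integralZl_EFin mu measurableT (f1 := fun z => (w z.1)%:E)) //.
  rewrite -(ge0_integralD mu measurableT (f1 := fun z => ((2 * U)%:E * (\1_B z.1 * (z.2 - m) ^+ 2)%:E)%E)
     (f2 := fun z => ((2 * (m - mm) ^+ 2)%:E * (w z.1)%:E)%E));
    try (by move=> z _; rewrite -!EFinM lee_fin ?mulr_ge0 // ?sqr_ge0);
    try (by apply: emeasurable_funM).
  apply: ge0_le_integral => //.
  - by move=> z _; rewrite lee_fin mulr_ge0 // sqr_ge0.
  - exact: mprod _ _ mw (mpoly2 mm).
  - by apply: emeasurable_funD => //; apply: emeasurable_funM.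
  move=> z _; rewrite -!EFinM -EFinD lee_fin; apply: t3 => //.
  by case/andP: (hw z.1).
- by move=> z _; rewrite -!EFinM lee_fin mulr_ge0 // mulr_ge0 // sqr_ge0.
- by move=> z _; rewrite -!EFinM lee_fin mulr_ge0.
have V0 : (0 <= \int[mu]_(z in setT) (\1_B z.1 * (z.2 - m) ^+ 2)%:E)%E.
  by apply: integral_ge0 => z _; rewrite lee_fin mulr_ge0 // sqr_ge0.
have K0 : (0 <= \int[mu]_(z in setT) (w z.1 * (z.2 - mm) ^+ 2)%:E)%E.
  by apply: integral_ge0 => z _; rewrite lee_fin mulr_ge0 // sqr_ge0.
apply: (fin_step _ _ _ _ _ _ _ L0 p0 (lt_le_trans L0 LU) hJ0lo _ V0 K0 Kle).
by rewrite mulr_ge0 // sqr_ge0.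
Qed.
End core.

Lemma point d (S : measurableType d) (R : realType) (M : nat) (S_ : 'I_M -> set S)
  (mS : forall i, measurable (S_ i)) (Q : R -> R.-pker S ~> (S * R)%type)
  (eps : R) (x : S) (b k : 'I_M) (del Pbk : R)
  (tp : Q eps x (setT `*` `]-oo, 0[) = 0%E)
  (d0 : 0 < del) (d1 : del < 1) (P0 : 0 < Pbk) (px : 0 < Pk Q eps x (S_ b))
  (hg : forall y, S_ b y -> `|Pk Q eps y (S_ k) / Pbk - 1| < del)
  (ETf : ET Q eps x (S_ b) \is a fin_num) :
  let m := fine (ET Q eps x (S_ b)) in let mw := fine (ETbar Q S_ eps x b b k) in
  [/\ ETbar Q S_ eps x b b k \is a fin_num, 0 <= m, (1 - del) * m <= (1 + del) * mw,
     (1 - del) * mw <= (1 + del) * m &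
   (VarTbar Q S_ eps x b b k <= (2 * ((1 + del) / (1 - del)))%:E * VarT Q eps x (S_ b)
      + (2 * (m - mw) ^+ 2)%:E)%E].
Proof.
set p := Pk Q eps x (S_ b).
set q := p^-1 * Pbk.
have q0 : 0 < q by rewrite mulr_gt0 // invr_gt0.
have hB : Q eps x (S_ b `*` setT) = p%:E.
  rewrite /p /Pk fineK // ge0_fin_numE ?measure_ge0 //.
  apply: (le_lt_trans (y := Q eps x setT)).
    apply: le_measure; rewrite ?inE //; exact: measurableX.
  by rewrite prob_kernel ltry.
have mw : measurable_fun setT (wbar Q S_ eps x b b k).
  rewrite /wbar; apply: measurable_funM; first apply: measurable_funM.
  - exact: measurable_cst.
  - apply: measurable_indic; exact: measurableI.
  - exact: (measurableT_comp (fine_measurable _) (measurable_kernel (Q eps) _ (measurableX (mS k) measurableT))).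
have hw : forall y, q * (1 - del) * \1_(S_ b) y <= wbar Q S_ eps x b b k y <= q * (1 + del) * \1_(S_ b) y.
  move=> y; rewrite /wbar setIid; case: (pselect (S_ b y)) => Hy.
    rewrite indicE mem_set //; exact: (t6 _ _ _ _ _ px P0 (hg y Hy)).
  by rewrite indicE memNset // !mulr0 mul0r lexx.
have L0 : 0 < q * (1 - del) by rewrite mulr_gt0 // subr_gt0.
have LU : q * (1 - del) <= q * (1 + del) by rewrite ler_pM2l //; lra.
have := core _ _ _ (Q eps x) tp (S_ b) (mS b) p px hB _ mw _ _ L0 LU hw ETf.
move=> /= [H1 H2 H3 H4 H5]; split => //.
- by move: H3; rewrite -!mulrA !ler_pM2l // invr_gt0.
- by move: H4; rewrite -!mulrA !ler_pM2l // invr_gt0.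
- have E : q * (1 + del) / (q * (1 - del)) = (1 + del) / (1 - del).
    field; rewrite ?gt_eqF //; lra.
  by rewrite E in H5.
Qed.

Lemma x1 (R : realFieldType) : 2 * ((1 + 2^-1) / (1 - 2^-1)) = 6 :> R.
Proof. by field. Qed.
Lemma x2 (R : realFieldType) : (0 : R) < (2 : R)^-1 < 1.
Proof. apply/andP; split; lra. Qed.
Lemma x3 (R : realFieldType) (Cv t m mw : R) : 0 <= t -> (m - mw) ^+ 2 <= 16 * t ->
  6 * (Cv * t) + 2 * (m - mw) ^+ 2 <= (6 * Num.max Cv 0 + 32) * t.
Proof.
move=> t0 h.
have : Cv <= Num.max Cv 0 by rewrite le_max lexx.
set c := Num.max Cv 0; set s := (m - mw) ^+ 2 in h *.
nra.
Qed.

Lemma fin_unif (R : realType) (I : finType) (P : I -> R -> R -> Prop) :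
  (forall i C C' e e', C <= C' -> 0 < e' -> e' <= e -> P i C e -> P i C' e') ->
  (forall i, exists C e, 0 < C /\ 0 < e /\ P i C e) ->
  exists C e, 0 < C /\ 0 < e /\ forall i, P i C e.
Proof.
move=> mono ex.
suff : forall s : seq I, exists C e, 0 < C /\ 0 < e /\ forall i, i \in s -> P i C e.
  move=> /(_ (enum I)) [C [e [C0 [e0 H]]]]; exists C, e; do 2 split => //.
  by move=> i; apply: H; rewrite mem_enum.
elim=> [|i s [C [e [C0 [e0 H]]]]]; first by exists 1, 1; do 2 split => //.
have [Ci [ei [Ci0 [ei0 Hi]]]] := ex i.
exists (Num.max C Ci), (Num.min e ei); split; first by rewrite lt_max C0.
split; first by rewrite lt_min e0 ei0.
move=> j; rewrite inE => /orP[/eqP ->|js].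
  apply: (mono _ Ci _ ei) => //; first by rewrite le_max lexx orbT.
    by rewrite lt_min e0 ei0.
  by rewrite ge_min lexx orbT.
apply: (mono _ C _ e) => //; last by apply: H.
- by rewrite le_max lexx.
- by rewrite lt_min e0 ei0.
- by rewrite ge_min lexx.
Qed.

Theorem lemma4p1 (d : measure_display) (S : measurableType d) (R : realType)
  (M : nat) (S_ : 'I_M -> set S)
  (mS : forall i, measurable (S_ i))
  (disjS : forall i j, i <> j -> S_ i `&` S_ j = set0)
  (coverS : forall x, exists i, S_ i x)
  (Q : R -> R.-pker S ~> (S * R)%type)
  (Qtime : forall eps x, 0 < eps -> Q eps x (setT `*` `]-oo, 0[) = 0%E)
  (Pm : R -> 'I_M -> 'I_M -> R) (tau : R -> 'I_M -> 'I_M -> R)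
  (* (i) *)
  (h_i : forall eps i x, 0 < eps -> S_ i x -> Pk Q eps x (S_ i) = 0)
  (* (ii) *)
  (h_ii : forall i j, i <> j ->
     (forall eps, 0 < eps ->
        (forall x, S_ i x -> Pk Q eps x (S_ j) = 0) /\ Pm eps i j = 0)
     \/
     ((forall eps, 0 < eps ->
        (forall x, S_ i x -> 0 < Pk Q eps x (S_ j)) /\ 0 < Pm eps i j) /\
      unif_ratio_to1R (fun eps x => Pk Q eps x (S_ j))
                      (fun eps => Pm eps i j) (S_ i)))
  (h_ii_sum : forall eps i, 0 < eps -> \sum_(j | j != i) Pm eps i j = 1)
  (* (iii) *)
  (h_iii : forall i j, i <> j -> exists (k : nat) (f : nat -> 'I_M),
     f 0%N = i /\ f k = j /\ forall r, (r < k)%N -> nz Pm (f r) (f r.+1))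
  (* (iv) *)
  (h_iv : forall i j, nz Pm i j ->
     unif_ratio_to1 (fun eps x => ET Q eps x (S_ j))
                    (fun eps => tau eps i j) (S_ i))
  (* (v) *)
  (h_v : forall i j, nz Pm i j -> exists (C eps0 : R), 0 < eps0 /\
     forall eps, 0 < eps -> eps <= eps0 -> forall x, S_ i x ->
       (VarT Q eps x (S_ j) <= (C * tau eps i j ^+ 2)%:E)%E) :
  (* extended states S_a x {b} with nz a b; targets S_c x {k} with
     Pbar_{(a,b),(c,k)} not identically 0, i.e. b = c and nz c k *)
  exists taubar : R -> 'I_M -> 'I_M -> R,
    (forall a b c k, nz Pm a b -> b = c -> nz Pm c k ->
       unif_ratio_to1 (fun eps x => ETbar Q S_ eps x b c k)
                      (fun eps => taubar eps a b) (S_ a)) /\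
    exists (C eps0 : R), 0 < C /\ 0 < eps0 /\
      forall a b c k, nz Pm a b -> b = c -> nz Pm c k ->
      forall eps, 0 < eps -> eps <= eps0 -> forall x, S_ a x ->
        (VarTbar Q S_ eps x b c k <= (C * taubar eps a b ^+ 2)%:E)%E.

Proof.
have B2 : forall i j, nz Pm i j ->
   (forall eps, 0 < eps ->
      (forall x, S_ i x -> 0 < Pk Q eps x (S_ j)) /\ 0 < Pm eps i j) /\
   unif_ratio_to1R (fun eps x => Pk Q eps x (S_ j))
                   (fun eps => Pm eps i j) (S_ i).
  move=> i j [ij nz0]; case: (h_ii i j ij) => // H; exfalso; apply: nz0.
  by move=> eps e0; exact: (H eps e0).2.
exists tau; split.
  move=> a b c k nab <- nbk e e0.
  set e' := Num.min e 1.
  have e'0 : 0 < e' by rewrite lt_min e0 ltr01.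
  have e'1 : e' <= 1 by rewrite ge_min lexx orbT.
  have e'e : e' <= e by rewrite ge_min lexx.
  set del := e' / 8.
  have del0 : 0 < del by rewrite divr_gt0.
  have del1 : del < 1.
    rewrite /del ltr_pdivrMr ?mul1r //; apply: (le_lt_trans e'1).
    by rewrite (ltr_nat R 1 8).
  have [pos_ab _] := B2 a b nab.
  have [pos_bk rbk] := B2 b k nbk.
  have [dg [dg0 Hg]] := rbk del del0.
  have [di [di0 Hi]] := h_iv a b nab del del0.
  exists (Num.min dg di); split; first by rewrite lt_min dg0 di0.
  move=> eps ep0; rewrite lt_min => /andP[epg epi] x Sx.
  have [Hi1 Hi2] := Hi eps ep0 epi x Sx.
  have := point _ _ _ _ S_ mS Q eps x b k del (Pm eps b k) (Qtime eps x ep0) del0 del1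
     (pos_bk eps ep0).2 ((pos_ab eps ep0).1 x Sx) (fun y Sy => Hg eps ep0 epg y Sy) Hi1.
  move=> /= [F1 F2 F3 F4 _]; split => //.
  apply: (lt_le_trans _ e'e).
  exact: (t4 _ _ _ _ _ _ e'0 e'1 erefl F2 F3 F4 Hi2).
pose P (i : 'I_M * 'I_M * 'I_M) (C e : R) :=
  let: (a, b, k) := i in nz Pm a b -> nz Pm b k ->
  forall eps, 0 < eps -> eps <= e -> forall x, S_ a x ->
    (VarTbar Q S_ eps x b b k <= (C * tau eps a b ^+ 2)%:E)%E.
have [C [e [C0 [e0 H]]]] : exists C e, 0 < C /\ 0 < e /\ forall i, P i C e.
  apply: fin_unif.
    move=> [[a b] k] C C' e e' CC' e'0 e'e HP nab nbk eps ep0 epe x Sx.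
    apply: (le_trans (HP nab nbk eps ep0 (le_trans epe e'e) x Sx)).
    by rewrite lee_fin ler_wpM2r // sqr_ge0.
  move=> [[a b] k].
  case: (pselect (nz Pm a b /\ nz Pm b k)) => [[nab nbk]|N]; last first.
    by exists 1, 1; do 2 split => //; move=> nab nbk; exfalso; apply: N.
  have [pos_ab _] := B2 a b nab.
  have [pos_bk rbk] := B2 b k nbk.
  have /andP[del0 del1] := x2 R.
  have [dg [dg0 Hg]] := rbk _ del0.
  have [di [di0 Hi]] := h_iv a b nab _ del0.
  have [Cv [ev [ev0 Hv]]] := h_v a b nab.
  exists (6 * Num.max Cv 0 + 32), (Num.min (Num.min (dg / 2) (di / 2)) ev).
  split.
    have : 0 <= Num.max Cv 0 by rewrite le_max lexx orbT.
    set c := Num.max Cv 0; lra.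
  split; first by rewrite !lt_min !divr_gt0 // ev0.
  move=> _ _ eps ep0; rewrite !le_min => /andP[/andP[epg epi] epv] x Sx.
  have epg' : eps < dg by lra.
  have epi' : eps < di by lra.
  have [Hi1 Hi2] := Hi eps ep0 epi' x Sx.
  have := point _ _ _ _ S_ mS Q eps x b k _ (Pm eps b k) (Qtime eps x ep0) del0 del1
     (pos_bk eps ep0).2 ((pos_ab eps ep0).1 x Sx) (fun y Sy => Hg eps ep0 epg' y Sy) Hi1.
  move=> /= [F1 F2 F3 F4 F5].
  have T5 := t5 _ _ _ _ _ erefl F2 F3 F4 Hi2.
  have HV := Hv eps ep0 epv x Sx.
  apply: (le_trans F5).
  rewrite x1.
  apply: (le_trans (leeD (lee_wpmul2l _ HV) (lexx _))); first by rewrite lee_fin.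
  rewrite -EFinM -EFinD lee_fin; apply: x3 => //; exact: sqr_ge0.
exists C, e; do 2 split => //.
move=> a b c k nab <- nbk; exact: (H (a, b, k)).
Qed.
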